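(* Let $G(1)=(V(1),E(1))$ be a neutral graph, let $G(2)=(V(2),E(2))$ be a $k$-regular graph, and let $\alpha\geq 2$ and $\beta\geq 1$ be integers with $2(\alpha-1)|E(1)|=\beta|V(2)|$. Let $G^{\oplus}$ be a simple graph obtained from the disjoint union of $G(1)$ and $G(2)$ by adding edges between $V(1)$ and $V(2)$ so that each vertex $u\in V(1)$ is incident to exactly $(\alpha-1)d_u$ added edges (with $d_u$ the degree of $u$ in $G(1)$) and each vertex of $V(2)$ is incident to exactly $\beta$ added edges. If $$\frac{|E(2)|}{|E(1)|}=(\alpha-1)^{2}=\Big(\frac{k}{\beta}\Big)^{2}=\Big(\frac{|V(2)|}{|V(1)|}\Big)^{2},$$ then $G^{\oplus}$ is neutral.
   Context: All graphs are finite, simple and connected. (In the paper's description, $\beta$ ''incomplete edges'' emanate from each vertex of $G(2)$, and for each edge of $G(1)$, $\alpha-1$ incomplete edges emanate from each of its endvertices; incomplete edges of $G(1)$ are merged one-to-one with incomplete edges of $G(2)$ until none is left.) For a graph $G=(V,E)$ with $m=|E|\geq1$ and degrees $d_u$, the assortativity coefficient is $$r(G)=\frac{m^{-1}\sum_{e_{uv}\in E} d_{u}d_{v}-\Big[m^{-1}\sum_{e_{uv}\in E} \tfrac{1}{2}(d_{u}+d_{v})\Big]^{2}}{m^{-1}\sum_{e_{uv}\in E} \tfrac{1}{2}(d^{2}_{u}+d^{2}_{v})-\Big[m^{-1}\sum_{e_{uv}\in E} \tfrac{1}{2}(d_{u}+d_{v})\Big]^{2}},$$ sums over edges counting each edge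 once, defined whenever the denominator is nonzero; $G$ is neutral if $r(G)$ is defined and equals $0$. *)

(* Defs.v *)
From mathcomp Require Import all_boot all_order all_algebra.
Set Implicit Arguments. Unset Strict Implicit. Unset Printing Implicit Defensive.
Import Order.TTheory GRing.Theory Num.Theory.

Definition simple_graph (T : finType) (e : rel T) : Prop :=
  symmetric e /\ irreflexive e.

Definition graph_connected (T : finType) (e : rel T) : Prop :=
  forall x y : T, connect e x y.

Definition deg (T : finType) (e : rel T) (u : T) : nat := #|[set v | e u v]|.

Definition regular (T : finType) (e : rel T) (k : nat) : Prop :=
  forall u : T, deg e u = k.

Definition edges (T : finType) (e : rel T) : {set {set T}} :=
  [set [set x.1; x.2] | x in [set x : T * T | e x.1 x.2]].

Local Open Scope ring_scope.

Definition assort_A (T : finType) (e : rel T) : rat :=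
  (#|edges e|%:R)^-1 * \sum_(S in edges e) \prod_(x in S) ((deg e x)%:R : rat).
Definition assort_B (T : finType) (e : rel T) : rat :=
  (#|edges e|%:R)^-1 * \sum_(S in edges e) (\sum_(x in S) ((deg e x)%:R : rat)) / 2.
Definition assort_C (T : finType) (e : rel T) : rat :=
  (#|edges e|%:R)^-1 * \sum_(S in edges e) (\sum_(x in S) ((deg e x)%:R : rat) ^+ 2) / 2.

Definition assort_num (T : finType) (e : rel T) : rat := assort_A e - assort_B e ^+ 2.
Definition assort_den (T : finType) (e : rel T) : rat := assort_C e - assort_B e ^+ 2.

Definition assortativity (T : finType) (e : rel T) : rat := assort_num e / assort_den e.

(* neutral: r(G) defined (m >= 1, nonzero denominator) and equal to 0 *)
Definition neutral (T : finType) (e : rel T) : Prop :=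
  (0 < #|edges e|)%N /\ assort_den e != 0 /\ assortativity e = 0.

Definition join_graph (T1 T2 : finType) (e1 : rel T1) (e2 : rel T2)
  (c : T1 -> T2 -> bool) : rel (T1 + T2) :=
  fun x y => match x, y with
  | inl a, inl b => e1 a b
  | inr a, inr b => e2 a b
  | inl a, inr b => c a b
  | inr a, inl b => c b a
  end.

(* Main.v *)
Require Import Defs.
From mathcomp Require Import all_boot all_order all_algebra.
From mathcomp Require Import ring lra.
Import Order.TTheory GRing.Theory Num.Theory.
Set Implicit Arguments. Unset Strict Implicit.
Local Open Scope ring_scope.

Lemma card_setE (T : finType) (P : pred T) :
  (#|[set x | P x]|%:R : rat) = \sum_x (P x)%:R.
Proof.
rewrite -sum1_card natr_sum big_mkcond /=; apply: eq_bigr => x _.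
by rewrite inE; case: (P x).
Qed.

Lemma set2_eq (T : finType) (a b x y : T) : x != y ->
  ([set a; b] == [set x; y]) = ((a == x) && (b == y) || (a == y) && (b == x)).
Proof.
move=> nxy; apply/idP/idP.
- move/eqP=> H.
  have hx : x \in [set a; b] by rewrite H !inE eqxx.
  have hy : y \in [set a; b] by rewrite H !inE eqxx orbT.
  have ha : a \in [set x; y] by rewrite -H !inE eqxx.
  have hb : b \in [set x; y] by rewrite -H !inE eqxx orbT.
  move: hx hy ha hb; rewrite !inE.
  case/orP=>/eqP ?; case/orP=>/eqP ?; subst.
  1-4: move=> _ _; first [by rewrite !eqxx ?orbT | by rewrite eqxx in nxy].
- by case/orP=>/andP[/eqP-> /eqP->] //; rewrite setUC.
Qed.

Lemma edges_sum (T : finType) (e : rel T) (F : {set T} -> rat) :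
  symmetric e -> irreflexive e ->
  (\sum_(S in edges e) F S) *+ 2 = \sum_x \sum_y (e x y)%:R * F [set x; y].
Proof.
move=> sym irr.
rewrite pair_big /=.
have -> : \sum_(p : T * T) (e p.1 p.2)%:R * F [set p.1; p.2]
    = \sum_(p | e p.1 p.2) F [set p.1; p.2].
  by rewrite [RHS]big_mkcond; apply: eq_bigr => p _; case: (e _ _); rewrite ?mul1r ?mul0r.
rewrite (partition_big (fun p => [set p.1; p.2]) (fun S => S \in edges e)) /=; last first.
  by move=> p hp; apply/imsetP; exists p; rewrite ?inE.
rewrite -sumrMnl; apply: eq_bigr => S /imsetP [p]; rewrite inE => hp ->.
have nxy : p.1 != p.2 by apply: contraTneq hp => ->; rewrite irr.
rewrite (eq_bigr (fun _ => F [set p.1; p.2])); last by move=> q /andP[_ /eqP ->].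
rewrite (eq_bigl (mem [set p; (p.2, p.1)])); last first.
  case=> a b /=; rewrite set2_eq // !inE; case: p hp nxy => x y /= hp nxy.
  rewrite !xpair_eqE; apply/andb_idl.
  by case/orP=>/andP[/eqP-> /eqP->] //; rewrite sym.
rewrite sumr_const cards2.
suff -> : p != (p.2, p.1) by [].
by case: p {hp} nxy => x y /=; apply: contra => /eqP[->].
Qed.

Definition Dg {T : finType} (e : rel T) (x : T) : rat := (deg e x)%:R.

Lemma degE (T : finType) (e : rel T) x : Dg e x = \sum_y (e x y)%:R.
Proof. by rewrite /Dg /deg card_setE. Qed.

Lemma edges_card (T : finType) (e : rel T) : symmetric e -> irreflexive e ->
  (#|edges e|%:R : rat) *+ 2 = \sum_x Dg e x.
Proof.
move=> sym irr.
have := edges_sum (fun _ => 1) sym irr; rewrite sumr_const => ->.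
by apply: eq_bigr => x _; rewrite degE; apply: eq_bigr => y _; rewrite mulr1.
Qed.

Lemma edges_prod (T : finType) (e : rel T) : symmetric e -> irreflexive e ->
  (\sum_(S in edges e) \prod_(x in S) Dg e x) *+ 2
   = \sum_x \sum_y (e x y)%:R * (Dg e x * Dg e y).
Proof.
move=> sym irr; rewrite edges_sum //; apply: eq_bigr => x _; apply: eq_bigr => y _.
case exy: (e x y); rewrite ?mul0r //.
have nxy : x != y by apply: contraTneq exy => ->; rewrite irr.
by rewrite big_setU1 ?big_set1 //= inE.
Qed.

Lemma edges_half (T : finType) (e : rel T) (g : T -> rat) : symmetric e -> irreflexive e ->
  \sum_(S in edges e) (\sum_(x in S) g x) / 2 = (\sum_x Dg e x * g x) / 2.
Proof.
move=> sym irr.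
have H := edges_sum (fun S => (\sum_(x in S) g x) / 2) sym irr.
have H2 : \sum_x \sum_y (e x y)%:R * ((\sum_(z in [set x; y]) g z) / 2)
   = (\sum_x Dg e x * g x) *+ 2 / 2.
  transitivity (\sum_x \sum_y ((e x y)%:R * g x / 2 + (e y x)%:R * g y / 2)).
    apply: eq_bigr => x _; apply: eq_bigr => y _.
    case exy: (e x y); last by rewrite (sym y x) exy !mul0r add0r.
    have nxy : x != y by apply: contraTneq exy => ->; rewrite irr.
    rewrite (sym y x) exy big_setU1 ?big_set1 //= ?inE //; ring.
  rewrite (eq_bigr (fun x => \sum_y (e x y)%:R * g x / 2 + \sum_y (e y x)%:R * g y / 2));
    last by move=> x _; rewrite big_split.
  rewrite big_split /= [X in _ + X = _]exchange_big /=.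
  have E : \sum_x \sum_y (e x y)%:R * g x / 2 = (\sum_x Dg e x * g x) / 2.
    rewrite mulr_suml; apply: eq_bigr => x _; rewrite degE mulr_suml mulr_suml.
    by apply: eq_bigr => y _.
  rewrite E; rewrite mulr2n mulrDl //.
rewrite H2 !mulr2n in H; move: H.
set X := \sum_(S in edges e) (\sum_(x in S) g x) / 2.
set Y := \sum_x Dg e x * g x.
move=> H; have h2 : (2:rat) != 0 by [].
apply: (mulIf h2); rewrite mulfVK // mulr_natr mulr2n H -mulr2n -mulr_natr mulfK //.
Qed.

Lemma half2 (X Y : rat) : X *+ 2 = Y -> X = Y / 2.
Proof. by move=> <-; field. Qed.

Lemma assortA_E (T : finType) (e : rel T) : symmetric e -> irreflexive e ->
  assort_A e = (#|edges e|%:R)^-1 * ((\sum_x \sum_y (e x y)%:R * (Dg e x * Dg e y)) / 2).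
Proof. by move=> sym irr; rewrite /assort_A; congr (_ * _); apply: half2; apply: edges_prod. Qed.

Lemma assortB_E (T : finType) (e : rel T) : symmetric e -> irreflexive e ->
  assort_B e = (#|edges e|%:R)^-1 * ((\sum_x Dg e x * Dg e x) / 2).
Proof. by move=> sym irr; rewrite /assort_B; congr (_ * _); apply: (edges_half (Dg e)). Qed.

Lemma assortC_E (T : finType) (e : rel T) : symmetric e -> irreflexive e ->
  assort_C e = (#|edges e|%:R)^-1 * ((\sum_x Dg e x * Dg e x ^+ 2) / 2).
Proof. by move=> sym irr; rewrite /assort_C; congr (_ * _); apply: (edges_half (fun x => Dg e x ^+ 2)). Qed.

Lemma var_ge0 (T : finType) (D : T -> rat) w : (forall x, 0 <= D x) ->
  0 <= \sum_x D x * D x ^+ 2 - 2 * w * \sum_x D x * D x + w ^+ 2 * \sum_x D x.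
Proof.
move=> D0.
have -> : \sum_x D x * D x ^+ 2 - 2 * w * \sum_x D x * D x + w ^+ 2 * \sum_x D x
   = \sum_x D x * (D x - w) ^+ 2.
  rewrite !mulr_sumr -sumrB -big_split /=; apply: eq_bigr => x _; ring.
by apply: sumr_ge0 => x _; rewrite mulr_ge0 // sqr_ge0.
Qed.

Theorem lemma7 (T1 T2 : finType) (e1 : rel T1) (e2 : rel T2) (k alpha beta : nat)
  (c : T1 -> T2 -> bool) :
  simple_graph e1 -> graph_connected e1 ->
  simple_graph e2 -> graph_connected e2 ->
  neutral e1 -> regular e2 k ->
  (2 <= alpha)%N -> (1 <= beta)%N ->
  (2 * (alpha - 1) * #|edges e1| = beta * #|T2|)%N ->
  (forall u : T1, #|[set v | c u v]| = ((alpha - 1) * deg e1 u)%N) ->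
  (forall v : T2, #|[set u | c u v]| = beta) ->
  (#|edges e2|%:R / #|edges e1|%:R : rat) = ((alpha - 1)%:R) ^+ 2 ->
  ((alpha - 1)%:R : rat) ^+ 2 = (k%:R / beta%:R) ^+ 2 ->
  (k%:R / beta%:R : rat) ^+ 2 = (#|T2|%:R / #|T1|%:R) ^+ 2 ->
  neutral (join_graph e1 e2 c).
Proof.
move=> [sym1 irr1] _ [sym2 irr2] _ [m1pos [den1 ne1]] reg2 halpha hbeta hnat hc1 hc2 _ hak hkn.
pose J := join_graph e1 e2 c.
have symJ : symmetric J by case=> x; case=> y //=; rewrite ?sym1 ?sym2.
have irrJ : irreflexive J by case=> x /=; rewrite ?irr1 ?irr2.
pose a : rat := (alpha - 1)%:R.
pose b : rat := beta%:R.
have b0 : b != 0 by rewrite /b pnatr_eq0 -lt0n.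
have a0 : a != 0 by rewrite /a pnatr_eq0 subn_eq0 -ltnNge.
rewrite -/a -/b in hak hkn.
have hk : (k%:R : rat) = a * b.
  move/eqP: hak; rewrite eqrXn2 // ?divr_ge0 // => /eqP ->.
  by rewrite divfK.
have [n10 hn2] : (#|T1|%:R : rat) != 0 /\ (#|T2|%:R : rat) = a * #|T1|%:R.
  move/eqP: hkn; rewrite eqrXn2 // ?divr_ge0 // => /eqP hkn.
  have ha : a = #|T2|%:R / #|T1|%:R by rewrite -hkn hk mulfK.
  have n10 : (#|T1|%:R : rat) != 0.
    by apply: contra a0 => /eqP n0; rewrite ha n0 invr0 mulr0.
  by split => //; rewrite ha divfK.
have h2m : (#|edges e1|%:R : rat) * 2 = b * #|T1|%:R.
  have := congr1 (fun n => n%:R : rat) hnat; rewrite /= !natrM -/a -/b hn2 => H.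
  apply: (mulIf a0); transitivity (2%:R * a * #|edges e1|%:R); first ring.
  by rewrite H; ring.
have hc1' u : \sum_v (c u v)%:R = a * Dg e1 u.
  by rewrite -card_setE hc1 natrM.
have hc2' v : \sum_u (c u v)%:R = b.
  by have := card_setE (fun u => c u v); rewrite /= hc2 => <-.
have hDl u : Dg J (inl u) = (a + 1) * Dg e1 u.
  by rewrite degE big_sumType /= -degE hc1'; ring.
have hDr v : Dg J (inr v) = (a + 1) * b.
  rewrite degE big_sumType /= hc2' -degE /Dg reg2 hk; ring.
have eS1 : \sum_x Dg J x = (a + 1) * \sum_u Dg e1 u + #|T2|%:R * ((a + 1) * b).
  rewrite big_sumType /= (eq_bigr _ (fun u _ => hDl u)) (eq_bigr _ (fun v _ => hDr v)).
  by rewrite -mulr_sumr sumr_const [#|T2|%:R * _]mulr_natl.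
have eS2 : \sum_x Dg J x * Dg J x
    = (a + 1) ^+ 2 * \sum_u Dg e1 u * Dg e1 u + #|T2|%:R * ((a + 1) * b) ^+ 2.
  rewrite big_sumType /= (eq_bigr (fun u => (a + 1) ^+ 2 * (Dg e1 u * Dg e1 u))); last first.
    by move=> u _; rewrite hDl; ring.
  rewrite [X in _ + X = _](eq_bigr (fun v => ((a + 1) * b) ^+ 2)); last by move=> v _; rewrite hDr; ring.
  by rewrite -mulr_sumr sumr_const [#|T2|%:R * _]mulr_natl.
have eS3 : \sum_x Dg J x * Dg J x ^+ 2
    = (a + 1) ^+ 3 * \sum_u Dg e1 u * Dg e1 u ^+ 2 + #|T2|%:R * ((a + 1) * b) ^+ 3.
  rewrite big_sumType /= (eq_bigr (fun u => (a + 1) ^+ 3 * (Dg e1 u * Dg e1 u ^+ 2))); last first.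
    by move=> u _; rewrite hDl; ring.
  rewrite [X in _ + X = _](eq_bigr (fun v => ((a + 1) * b) ^+ 3)); last by move=> v _; rewrite hDr; ring.
  by rewrite -mulr_sumr sumr_const [#|T2|%:R * _]mulr_natl.
have eP : \sum_x \sum_y (J x y)%:R * (Dg J x * Dg J y)
    = (a + 1) ^+ 2 * (\sum_u \sum_w (e1 u w)%:R * (Dg e1 u * Dg e1 w))
      + 2 * (a + 1) ^+ 2 * b * a * (\sum_u Dg e1 u * Dg e1 u)
      + #|T2|%:R * (((a + 1) * b) ^+ 2 * (a * b)).
  rewrite big_sumType /=.
  rewrite (eq_bigr (fun u => (a + 1) ^+ 2 * (\sum_w (e1 u w)%:R * (Dg e1 u * Dg e1 w))
       + (a + 1) ^+ 2 * b * a * (Dg e1 u * Dg e1 u))); last first.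
    move=> u _; rewrite big_sumType /=; congr (_ + _).
      by rewrite mulr_sumr; apply: eq_bigr => w _; rewrite !hDl; ring.
    rewrite (eq_bigr (fun v => (c u v)%:R * ((a + 1) * Dg e1 u * ((a + 1) * b)))); last first.
      by move=> v _; rewrite hDl hDr.
    by rewrite -mulr_suml hc1'; ring.
  rewrite [X in _ + X = _](eq_bigr (fun v => (a + 1) ^+ 2 * b * (\sum_u (c u v)%:R * Dg e1 u)
       + ((a + 1) * b) ^+ 2 * (a * b))); last first.
    move=> v _; rewrite big_sumType /=; congr (_ + _).
      by rewrite mulr_sumr; apply: eq_bigr => u _; rewrite hDl hDr; ring.
    rewrite (eq_bigr (fun w => (e2 v w)%:R * ((a + 1) * b) ^+ 2)); last first.
      by move=> w _; rewrite !hDr.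
    by rewrite -mulr_suml -degE /Dg reg2 hk mulrC.
  have ex : \sum_v \sum_u (c u v)%:R * Dg e1 u = a * \sum_u Dg e1 u * Dg e1 u.
    rewrite exchange_big /= mulr_sumr; apply: eq_bigr => u _.
    by rewrite -mulr_suml hc1'; ring.
  rewrite !big_split /= -!mulr_sumr ex sumr_const -[_ *+ #|_|]mulr_natl.
  ring.
have mJ2 := edges_card symJ irrJ; rewrite eS1 in mJ2.
have m12 := edges_card sym1 irr1.
have V1 := @var_ge0 _ (Dg e1) ((\sum_u Dg e1 u * Dg e1 u) / \sum_u Dg e1 u) (fun x => ler0n _ _).
have V2 := @var_ge0 _ (Dg e1) b (fun x => ler0n _ _).
move: den1 ne1; rewrite /assortativity /assort_num /assort_den (assortA_E sym1 irr1).
rewrite (assortB_E sym1 irr1) (assortC_E sym1 irr1) => den1 ne1.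
rewrite /neutral -/J -(ltr0n rat) /assortativity /assort_num /assort_den.
rewrite (assortA_E symJ irrJ) (assortB_E symJ irrJ) (assortC_E symJ irrJ) eP eS2 eS3.
have m1p : (0 : rat) < #|edges e1|%:R by rewrite ltr0n.
have a_ge0 : 0 <= a by rewrite /a ler0n.
have b_gt0 : 0 < b by rewrite /b ltr0n.
move: mJ2 m12 V1 V2 den1 ne1 m1p h2m hn2 n10.
move: (\sum_u Dg e1 u * Dg e1 u ^+ 2) => S3.
move: (\sum_u Dg e1 u * Dg e1 u) => S2.
move: (\sum_u Dg e1 u) => S1.
move: (\sum_u \sum_w (e1 u w)%:R * (Dg e1 u * Dg e1 w)) => P1.
move: (#|edges J|%:R : rat) => mJ.
move: (#|edges e1|%:R : rat) => m1.
move: (#|T1|%:R : rat) (#|T2|%:R : rat) => n1 n2.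
clearbody a b.
move=> mJ2 m12 V1 V2 den1 ne1 m1p h2m hn2 n10.
have hS1 : S1 = m1 * 2 by rewrite -m12 mulr_natr.
rewrite hS1 in V1 V2.
have m10 : m1 != 0 by apply: lt0r_neq0.
have a1p : 0 < a + 1 := ltr_pwDr ltr01 a_ge0.
have a10 : a + 1 != 0 by apply: lt0r_neq0.
have hn1 : n1 = m1 * 2 / b by rewrite h2m; field; rewrite ?b0.
have hmJ : mJ = (a + 1) ^+ 2 * m1.
  rewrite (half2 mJ2) hS1 hn2 hn1; field.
  by rewrite ?a10 ?m10 ?b0.
move/eqP: ne1; rewrite mulf_eq0 invr_eq0 (negbTE den1) orbF subr_eq0 => /eqP hA.
have hP1 : P1 = m1 * 2 * (m1^-1 * (S2 / 2)) ^+ 2.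
  rewrite -hA; field.
  by rewrite ?a10 ?m10 ?b0.
rewrite hmJ hP1 hn2 hn1.
split; first by rewrite mulr_gt0 // exprn_gt0.
have m2p : 0 < m1 * 2 by rewrite mulr_gt0.
have d1pos : 0 < m1^-1 * (S3 / 2) - (m1^-1 * (S2 / 2)) ^+ 2.
  rewrite lt_def den1 /=.
  have -> : m1^-1 * (S3 / 2) - (m1^-1 * (S2 / 2)) ^+ 2
     = (S3 - 2 * (S2 / (m1 * 2)) * S2 + (S2 / (m1 * 2)) ^+ 2 * (m1 * 2)) / (m1 * 2).
    field; by rewrite ?a10 ?m10 ?b0.
  by apply: divr_ge0 => //; apply: ltW.
have key : forall Z, Z = (m1^-1 * (S3 / 2) - (m1^-1 * (S2 / 2)) ^+ 2)
     + a * ((S3 - 2 * b * S2 + b ^+ 2 * (m1 * 2)) / (m1 * 2)) -> 0 < Z.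
  move=> Z ->; apply: ltr_wpDr => //.
  by apply: mulr_ge0 => //; apply: divr_ge0 => //; apply: ltW.
split.
  apply: lt0r_neq0; apply: key.
  field; by rewrite ?a10 ?m10 ?b0.
apply/eqP; rewrite mulf_eq0; apply/orP; left; apply/eqP.
field; by rewrite ?a10 ?m10 ?b0.
Qed.
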